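(* Let $n,d$ be positive integers. For all ${X},{Y}\in \mathbb{R}^{d\times n}$ we have $$d_{\mathcal{D}}({X},{Y})\leq 2n^{3/2}\, d_{\mathcal{G}_{\pm}}({X},{Y}).$$ Moreover, for all ${X},{Y}\in\mathbb{R}^{d\times n}$ satisfying $\|{X}\|_{1,2}\leq 1$ and $\|{Y}\|_{1,2}\leq 1$, we have $$\frac{1}{4n+2}\, d_{\mathcal{G}_{\pm}}^2({X},{Y}) \leq d_{\mathcal{D}}({X},{Y}).$$
   Context: A point set is a matrix ${X}\in\mathbb{R}^{d\times n}$ with columns $x_1,\dots,x_n\in\mathbb{R}^d$. The group $\mathcal{G}_{\pm}=O(d)\rtimes\mathbb{R}^d\times S_n$ acts on point sets by permuting the columns, applying a common orthogonal matrix to all columns, and adding a common translation vector to all columns. The Procrustes Matching metric is $$d_{\mathcal{G}_{\pm}}({X},{Y})=\Big[\min_{(\pi,R,t)\in S_n\times O(d)\times\mathbb{R}^d}\sum_{j=1}^n\|x_j-Ry_{\pi(j)}+t\|_2^2\Big]^{1/2}=\min_{g\in\mathcal{G}_{\pm}}\|{X}-g{Y}\|_F.$$ The Hard-Gromov-Wasserstein distance is $$d_{\mathcal{D}}({X},{Y})=\min_{\pi\in S_n}\sum_{i,j=1}^n\big|\,\|x_i-x_j\|_2-\|y_{\pi(i)}-y_{\pi(j)}\|_2\,\big|.$$ $\|{X}\|_{1,2}=\max_{1\le i\le n}\|x_i\|_2$. *)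

(* Defs.v *)
From HB Require Import structures.
From mathcomp Require Import all_boot all_order all_algebra all_fingroup.
From mathcomp Require Import classical_sets reals.
Set Implicit Arguments. Unset Strict Implicit. Unset Printing Implicit Defensive.
Import Order.TTheory GRing.Theory Num.Theory.
Local Open Scope ring_scope.
Local Open Scope classical_set_scope.

Section Defs.
Variable R : realType.

Definition colnorm (d n : nat) (X : 'M[R]_(d, n)) (j : 'I_n) : R :=
  Num.sqrt (\sum_(i < d) X i j ^+ 2).

Definition coldist (d n : nat) (X : 'M[R]_(d, n)) (i j : 'I_n) : R :=
  Num.sqrt (\sum_(k < d) (X k i - X k j) ^+ 2).

Definition norm12 (d n : nat) (X : 'M[R]_(d, n)) : R :=
  \big[Order.max/0]_(j < n) colnorm X j.

Definition is_orthogonal (d : nat) (Q : 'M[R]_d) : Prop := Q^T *m Q = 1%:M.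

Definition procrustes_cost (d n : nat) (X Y : 'M[R]_(d, n))
    (p : 'S_n) (Q : 'M[R]_d) (t : 'cV[R]_d) : R :=
  \sum_(j < n) \sum_(i < d)
     (X i j - (Q *m Y) i (p j) + t i ord0) ^+ 2.

(* Procrustes matching metric: square root of the minimum (= infimum, the
   minimum being attained) of the cost over S_n x O(d) x R^d. *)
Definition dG (d n : nat) (X Y : 'M[R]_(d, n)) : R :=
  Num.sqrt (inf [set c | exists (p : 'S_n) (Q : 'M[R]_d) (t : 'cV[R]_d),
                         is_orthogonal Q /\ c = procrustes_cost X Y p Q t]).

Definition hgw_cost (d n : nat) (X Y : 'M[R]_(d, n)) (p : 'S_n) : R :=
  \sum_(i < n) \sum_(j < n) `| coldist X i j - coldist Y (p i) (p j) |.

(* Hard Gromov-Wasserstein distance: minimum over the finite set S_n *)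
Definition dD (d n : nat) (X Y : 'M[R]_(d, n)) : R :=
  inf [set c | exists p : 'S_n, c = hgw_cost X Y p].

End Defs.

(* Main.v *)
Require Import Defs.
From HB Require Import structures.
From mathcomp Require Import all_boot all_order all_algebra all_fingroup.
From mathcomp Require Import classical_sets reals.
From mathcomp Require Import topology normedtype derive.
From mathcomp Require Import ring lra.
Import Order.TTheory GRing.Theory Num.Theory.
Import numFieldTopology.Exports numFieldNormedType.Exports.
Local Open Scope ring_scope.
Set Implicit Arguments. Unset Strict Implicit. Unset Printing Implicit Defensive.

Section VecA.
Variable R : realType.

Lemma cs (I : finType) (a b : I -> R) :
  (\sum_i a i * b i)^+2 <= (\sum_i a i ^+2) * (\sum_i b i ^+2).
Proof.
set A := \sum_i a i ^+2; set B := \sum_i b i ^+2; set C := \sum_i a i * b i.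
have E : \sum_i \sum_j (a i * b j - a j * b i)^+2 = 2 * (A * B - C^+2).
  have -> : 2 * (A * B - C^+2) = A * B + B * A - 2 * (C * C) by ring.
  rewrite /A /B /C !big_distrlr /= mulr_sumr -big_split -sumrB /=.
  apply: eq_bigr => i _; rewrite mulr_sumr -big_split -sumrB /=.
  apply: eq_bigr => j _; ring.
have : 0 <= \sum_i \sum_j (a i * b j - a j * b i)^+2.
  by apply: sumr_ge0 => i _; apply: sumr_ge0 => j _; exact: sqr_ge0.
rewrite E; lra.
Qed.

Lemma cs1 (I : finType) (a : I -> R) :
  (\sum_i a i)^+2 <= #|I|%:R * (\sum_i a i ^+2).
Proof.
have := cs a (fun _ => 1).
under eq_bigr do rewrite mulr1.
under [X in _ <= _ * X]eq_bigr do rewrite expr1n.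
by rewrite sumr_const mulrC.
Qed.

Definition dot d (u v : 'I_d -> R) := \sum_k u k * v k.
Definition enorm d (u : 'I_d -> R) := Num.sqrt (dot u u).

Lemma dotC d (u v : 'I_d -> R) : dot u v = dot v u.
Proof. by apply: eq_bigr => i _; rewrite mulrC. Qed.

Lemma dot_ge0 d (u : 'I_d -> R) : 0 <= dot u u.
Proof. by apply: sumr_ge0 => i _; rewrite -expr2 sqr_ge0. Qed.

Lemma enorm_ge0 d (u : 'I_d -> R) : 0 <= enorm u.
Proof. exact: sqrtr_ge0. Qed.

Lemma enorm_sq d (u : 'I_d -> R) : enorm u ^+ 2 = dot u u.
Proof. by rewrite sqr_sqrtr // dot_ge0. Qed.

Lemma dot_cs d (u v : 'I_d -> R) : dot u v ^+ 2 <= dot u u * dot v v.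
Proof.
have := cs u v; congr (_ <= _ * _); apply: eq_bigr => i _; by rewrite expr2.
Qed.

Lemma dot_le d (u v : 'I_d -> R) : dot u v <= enorm u * enorm v.
Proof.
have h : `|dot u v| <= enorm u * enorm v.
  rewrite -sqrtr_sqr /enorm -sqrtrM ?dot_ge0 //.
  by rewrite ler_wsqrtr // dot_cs.
exact: le_trans (ler_norm _) h.
Qed.

Lemma dotDl d (u v w : 'I_d -> R) :
  dot (fun k => u k + v k) w = dot u w + dot v w.
Proof. by rewrite /dot -big_split; apply: eq_bigr => i _ /=; ring. Qed.

Lemma dotBl d (u v w : 'I_d -> R) :
  dot (fun k => u k - v k) w = dot u w - dot v w.
Proof. by rewrite /dot -sumrB; apply: eq_bigr => i _ /=; ring. Qed.

Lemma dotZl d (c : R) (u w : 'I_d -> R) :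
  dot (fun k => c * u k) w = c * dot u w.
Proof. rewrite /dot mulr_sumr; apply: eq_bigr => i _ /=; ring. Qed.

Lemma dotDr d (u v w : 'I_d -> R) :
  dot w (fun k => u k + v k) = dot w u + dot w v.
Proof. by rewrite dotC dotDl ![dot _ w]dotC. Qed.

Lemma dotBr d (u v w : 'I_d -> R) :
  dot w (fun k => u k - v k) = dot w u - dot w v.
Proof. by rewrite dotC dotBl ![dot _ w]dotC. Qed.

Lemma dotZr d (c : R) (u w : 'I_d -> R) :
  dot w (fun k => c * u k) = c * dot w u.
Proof. by rewrite dotC dotZl dotC. Qed.

Lemma enorm_triangle d (u v : 'I_d -> R) :
  enorm (fun k => u k + v k) <= enorm u + enorm v.
Proof.
rewrite -(ger0_norm (addr_ge0 (enorm_ge0 u) (enorm_ge0 v))) -sqrtr_sqr.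
apply: ler_wsqrtr.
rewrite dotDl !dotDr (dotC v u) -!enorm_sq.
have := dot_le u v; have := enorm_ge0 u; have := enorm_ge0 v.
nra.
Qed.

Lemma enormN d (u : 'I_d -> R) : enorm (fun k => - u k) = enorm u.
Proof. by rewrite /enorm /dot; congr Num.sqrt; apply: eq_bigr => i _ /=; ring. Qed.

Lemma enorm_ext d (u v : 'I_d -> R) : u =1 v -> enorm u = enorm v.
Proof. by move=> e; rewrite /enorm /dot; congr Num.sqrt; apply: eq_bigr => i _; rewrite e. Qed.

Lemma enorm_triangleB d (u v : 'I_d -> R) :
  enorm (fun k => u k - v k) <= enorm u + enorm v.
Proof.
by have := enorm_triangle u (fun k => - v k); rewrite enormN.
Qed.

Lemma enorm_rev d (u v : 'I_d -> R) :
  `| enorm u - enorm v | <= enorm (fun k => u k - v k).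
Proof.
rewrite ler_norml; apply/andP; split.
  have := enorm_triangle (fun k => v k - u k) u.
  rewrite (enorm_ext (u := fun k => v k - u k + u k) (v := v)); last by move=> k; ring.
  rewrite (enorm_ext (u := fun k => v k - u k) (v := fun k => - (u k - v k))); last by move=> k; ring.
  rewrite (enormN (fun k => u k - v k)); lra.
have := enorm_triangle (fun k => u k - v k) v.
rewrite (enorm_ext (u := fun k => u k - v k + v k) (v := u)); last by move=> k; ring.
lra.
Qed.

End VecA.

Section P1.
Variable R : realType.

Definition app d (Q : 'M[R]_d) (u : 'I_d -> R) : 'I_d -> R :=
  fun i => \sum_k Q i k * u k.

Lemma orthP d (Q : 'M[R]_d) : Defs.is_orthogonal Q ->
  forall k l, \sum_i Q i k * Q i l = (k == l)%:R.
Proof.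
move=> hQ k l; have := congr1 (fun M : 'M[R]_d => M k l) hQ.
by rewrite /= !mxE => <-; apply: eq_bigr => i _; rewrite !mxE.
Qed.

Lemma sum_delta d (F : 'I_d -> R) k : \sum_l F l * (k == l)%:R = F k.
Proof.
rewrite (bigD1 k) //= eqxx mulr1 big1 ?addr0 // => l /negbTE.
by rewrite eq_sym => ->; rewrite mulr0.
Qed.

Lemma orth_dot d (Q : 'M[R]_d) u v : Defs.is_orthogonal Q ->
  dot (app Q u) (app Q v) = dot u v.
Proof.
move=> hQ; rewrite /dot /app.
under eq_bigr do rewrite big_distrlr /=.
rewrite exchange_big; apply: eq_bigr => k _; rewrite exchange_big /=.
rewrite (eq_bigr (fun l => u k * v l * (k == l)%:R)); last first.
  move=> l _; rewrite -(orthP hQ k l) mulr_sumr; apply: eq_bigr => i _; ring.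
exact: (sum_delta (fun l => u k * v l)).
Qed.

Lemma orth_enorm d (Q : 'M[R]_d) u : Defs.is_orthogonal Q ->
  enorm (app Q u) = enorm u.
Proof. by move=> hQ; rewrite /enorm orth_dot. Qed.

Definition colv d n (X : 'M[R]_(d, n)) j : 'I_d -> R := fun k => X k j.

Lemma coldistE d n (X : 'M[R]_(d, n)) i j :
  coldist X i j = enorm (fun k => X k i - X k j).
Proof. by rewrite /coldist /enorm /dot; congr Num.sqrt; apply: eq_bigr => k _; rewrite expr2. Qed.

Lemma colnormE d n (X : 'M[R]_(d, n)) j :
  colnorm X j = enorm (colv X j).
Proof. by rewrite /colnorm /enorm /dot; congr Num.sqrt; apply: eq_bigr => k _; rewrite expr2. Qed.

Lemma coldist_ge0 d n (X : 'M[R]_(d, n)) i j : 0 <= coldist X i j.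
Proof. exact: sqrtr_ge0. Qed.

Lemma cost_ge0 d n (X Y : 'M[R]_(d, n)) p Q t : 0 <= procrustes_cost X Y p Q t.
Proof. by apply: sumr_ge0 => j _; apply: sumr_ge0 => i _; apply: sqr_ge0. Qed.

Lemma hgw_ge0 d n (X Y : 'M[R]_(d, n)) p : 0 <= hgw_cost X Y p.
Proof. by apply: sumr_ge0 => j _; apply: sumr_ge0 => i _. Qed.

Lemma hgw_le_cost d n (X Y : 'M[R]_(d, n)) (p : 'S_n) Q t :
  Defs.is_orthogonal Q ->
  hgw_cost X Y p <= 2 * (n%:R * Num.sqrt n%:R) * Num.sqrt (procrustes_cost X Y p Q t).
Proof.
move=> hQ.
pose e j := fun i => X i j - (Q *m Y) i (p j) + t i ord0.
have costE : procrustes_cost X Y p Q t = \sum_j enorm (e j) ^+ 2.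
  apply: eq_bigr => j _; rewrite enorm_sq; apply: eq_bigr => i _; by rewrite expr2.
have step : forall i j, `|coldist X i j - coldist Y (p i) (p j)| <= enorm (e i) + enorm (e j).
  move=> i j.
  have -> : coldist Y (p i) (p j) = enorm (fun k => (Q *m Y) k (p i) - (Q *m Y) k (p j)).
    rewrite coldistE -(orth_enorm _ hQ); apply: enorm_ext => k.
    by rewrite /app !mxE -sumrB; apply: eq_bigr => l _; ring.
  rewrite coldistE; apply: le_trans (enorm_rev _ _) _.
  apply: le_trans (enorm_triangleB (e i) (e j)).
  by rewrite le_eqVlt; apply/orP; left; apply/eqP; apply: enorm_ext => k; rewrite /e; ring.
have h1 : hgw_cost X Y p <= \sum_(i < n) \sum_(j < n) (enorm (e i) + enorm (e j)).
  by apply: ler_sum => i _; apply: ler_sum => j _; exact: step.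
have h2 : \sum_(i < n) \sum_(j < n) (enorm (e i) + enorm (e j)) = 2 * n%:R * \sum_i enorm (e i).
  rewrite (eq_bigr (fun i => n%:R * enorm (e i) + \sum_(j < n) enorm (e j))); last first.
    by move=> i _; rewrite big_split /= sumr_const card_ord mulr_natl.
  rewrite big_split /= sumr_const card_ord -mulr_sumr mulr_natl; ring.
have h3 : \sum_(i < n) enorm (e i) <= Num.sqrt n%:R * Num.sqrt (procrustes_cost X Y p Q t).
  rewrite -sqrtrM ?ler0n // costE.
  rewrite -(ger0_norm (sumr_ge0 _ (fun i _ => enorm_ge0 (e i)))) -sqrtr_sqr.
  apply: ler_wsqrtr; have := cs1 (fun i : 'I_n => enorm (e i)); by rewrite card_ord.
apply: le_trans h1 _; rewrite h2.
have := sqrtr_ge0 (n%:R : R); have := ler0n R n; nra.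
Qed.

End P1.

Section Key.
Variable R : realType.

Lemma sum4 (I J : finType) (F : J -> J -> I -> I -> R) :
  \sum_a \sum_b \sum_i \sum_j F a b i j = \sum_i \sum_j \sum_a \sum_b F a b i j.
Proof.
under eq_bigr do rewrite exchange_big.
under eq_bigr do under eq_bigr do rewrite exchange_big.
rewrite exchange_big.
by under eq_bigr do rewrite exchange_big.
Qed.

Lemma key (I : finType) d (u v : I -> 'I_d -> R) :
 (forall w, 0 <= \sum_j dot w (u j) * dot w (v j)) ->
 (forall a b, \sum_j u j a * v j b = \sum_j u j b * v j a) ->
 (\sum_j dot (fun k => u j k - v j k) (fun k => u j k - v j k))^+2
   <= 2 * #|I|%:R * \sum_i \sum_j (dot (u i) (u j) - dot (v i) (v j))^+2.
Proof.
move=> H1 H2.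
pose z j := fun k => u j k - v j k.
pose f j := fun k => u j k + v j k.
pose A i j := dot (z i) (f j).
have zf i j : A i j = dot (u i) (u j) + dot (u i) (v j) - dot (v i) (u j) - dot (v i) (v j).
  by rewrite /A /z /f dotBl !dotDr; ring.
have ME i j : dot (u i) (u j) - dot (v i) (v j) = (A i j + A j i) / 2.
  rewrite !zf (dotC (u j) (u i)) (dotC (v j) (v i)) (dotC (u j) (v i)) (dotC (v j) (u i)).
  by field.
have SM : \sum_i \sum_j (dot (u i) (u j) - dot (v i) (v j))^+2
    = (\sum_i \sum_j A i j ^+ 2) / 2 + (\sum_i \sum_j A i j * A j i) / 2.
  have e2 : \sum_i \sum_j A j i ^+ 2 = \sum_i \sum_j A i j ^+ 2 by rewrite exchange_big.
  transitivity ((\sum_i \sum_j A i j ^+ 2 + \sum_i \sum_j A j i ^+ 2 + 2 * \sum_i \sum_j A i j * A j i) / 4).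
    rewrite mulr_sumr -!big_split mulr_suml /=. apply: eq_bigr => i _.
    rewrite mulr_sumr -!big_split mulr_suml /=; apply: eq_bigr => j _.
    by rewrite ME; field.
  by rewrite e2; field.
pose K a b := \sum_i z i a * f i b.
have Ksym a b : K a b = K b a.
  apply/eqP; rewrite -subr_eq0; apply/eqP.
  have -> : K a b - K b a = 2 * (\sum_i u i a * v i b - \sum_i u i b * v i a).
    rewrite /K /z /f /= -!sumrB mulr_sumr; apply: eq_bigr => i _; ring.
  by rewrite H2 subrr mulr0.
have AA : \sum_i \sum_j A i j * A j i = \sum_a \sum_b K a b * K b a.
  rewrite /A /K /dot.
  under eq_bigr do under eq_bigr do rewrite big_distrlr /=.
  under [RHS]eq_bigr do under eq_bigr do rewrite big_distrlr /=.
  rewrite [RHS]sum4.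
  apply: eq_bigr => i _; apply: eq_bigr => j _; apply: eq_bigr => a _; apply: eq_bigr => b _.
  ring.
have AA0 : 0 <= \sum_i \sum_j A i j * A j i.
  rewrite AA; apply: sumr_ge0 => a _; apply: sumr_ge0 => b _.
  by rewrite Ksym -expr2 sqr_ge0.
have c1 : \sum_i \sum_j dot (z i) (z j) ^+ 2 <= \sum_i \sum_j A i j ^+ 2.
  rewrite -subr_ge0 -sumrB.
  rewrite (eq_bigr (fun i => 4 * \sum_j dot (z i) (u j) * dot (z i) (v j))); last first.
    move=> i _; rewrite -sumrB mulr_sumr; apply: eq_bigr => j _.
    rewrite /A /f /z; rewrite dotDr dotBr; ring.
  by apply: sumr_ge0 => i _; rewrite mulr_ge0 //.
have d1 : \sum_i dot (z i) (z i) ^+ 2 <= \sum_i \sum_j dot (z i) (z j) ^+ 2.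
  apply: ler_sum => i _; rewrite (bigD1 i) //= lerDl.
  by apply: sumr_ge0 => j _; exact: sqr_ge0.
have e1 := cs1 (fun i => dot (z i) (z i)).
have n0 : 0 <= (#|I|%:R : R) by rewrite ler0n.
rewrite SM.
have : #|I|%:R * \sum_i dot (z i) (z i) ^+ 2 <= #|I|%:R * \sum_i \sum_j A i j ^+ 2.
  by rewrite ler_wpM2l //; exact: le_trans d1 c1.
move: e1 AA0 n0; rewrite /z /=.
set P := (\sum_i _)^+2; set Q := \sum_i \sum_j A i j ^+ 2.
set S := \sum_i \sum_j A i j * A j i; set T := \sum_i dot _ _ ^+ 2.
nra.
Qed.

End Key.

Section Cent.
Variable R : realType.
Variable n : nat.
Hypothesis hn : (0 < n)%N.

Let nR : (n%:R : R) != 0. Proof. by rewrite pnatr_eq0 -lt0n. Qed.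

Definition cen (N : 'I_n -> 'I_n -> R) i j :=
  N i j - n%:R^-1 * \sum_k N k j - n%:R^-1 * \sum_k N i k
  + n%:R^-1 * n%:R^-1 * \sum_k \sum_l N k l.

Lemma cenB (N N' : 'I_n -> 'I_n -> R) i j :
  cen N i j - cen N' i j = cen (fun i j => N i j - N' i j) i j.
Proof.
rewrite /cen.
under [X in _ = _ + _ * X]eq_bigr do rewrite sumrB.
rewrite !sumrB; ring.
Qed.

Lemma center1 (a : 'I_n -> R) :
  \sum_i (a i - n%:R^-1 * \sum_k a k)^+2 <= \sum_i a i ^+ 2.
Proof.
set m := n%:R^-1 * \sum_k a k.
have sa : \sum_k a k = n%:R * m by rewrite /m mulrA divff // mul1r.
have -> : \sum_i (a i - m)^+2 = \sum_i a i ^+ 2 - 2 * m * \sum_k a k + n%:R * m ^+ 2.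
  rewrite (eq_bigr (fun i => a i ^+ 2 - 2 * m * a i + m ^+ 2)); last by move=> i _; ring.
  rewrite big_split sumrB /= sumr_const card_ord -mulr_sumr; ring.
rewrite sa.
have : 0 <= n%:R * m ^+ 2 by rewrite mulr_ge0 ?ler0n ?sqr_ge0.
lra.
Qed.

Lemma cen_sq (N : 'I_n -> 'I_n -> R) :
  \sum_i \sum_j cen N i j ^+ 2 <= \sum_i \sum_j N i j ^+ 2.
Proof.
pose N1 i j := N i j - n%:R^-1 * \sum_k N k j.
have E i j : cen N i j = N1 i j - n%:R^-1 * \sum_l N1 i l.
  have ex : \sum_l \sum_k N k l = \sum_k \sum_l N k l by rewrite exchange_big.
  rewrite /cen /N1 sumrB -mulr_sumr ex; ring.
have s1 : \sum_i \sum_j cen N i j ^+ 2 <= \sum_i \sum_j N1 i j ^+ 2.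
  apply: ler_sum => i _; under eq_bigr do rewrite E.
  exact: (center1 (fun j => N1 i j)).
apply: le_trans s1 _.
rewrite exchange_big [X in _ <= X]exchange_big /=.
apply: ler_sum => j _; exact: (center1 (fun i => N i j)).
Qed.

Variable d : nat.
Variable u : 'I_n -> 'I_d -> R.

Lemma dot_sqB (p q : 'I_d -> R) :
  dot (fun k => p k - q k) (fun k => p k - q k) = dot p p + dot q q - 2 * dot p q.
Proof.
rewrite /dot (eq_bigr (fun k => p k * p k + q k * q k - 2 * (p k * q k))); last by move=> k _; ring.
by rewrite sumrB big_split -mulr_sumr.
Qed.

Definition mean := fun k => n%:R^-1 * \sum_j u j k.
Definition cent j := fun k => u j k - mean k.

Lemma dot_sumr (w : 'I_d -> R) (F : 'I_n -> 'I_d -> R) :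
  dot w (fun m => \sum_k F k m) = \sum_k dot w (F k).
Proof.
rewrite /dot exchange_big /=; apply: eq_bigr => m _; by rewrite mulr_sumr.
Qed.

Lemma cent_sum m : \sum_k cent k m = 0.
Proof.
rewrite /cent sumrB sumr_const card_ord /mean -mulrnAl -mulr_natr mulVf // mul1r.
by rewrite subrr.
Qed.

Lemma gram_cen i j :
  dot (cent i) (cent j) =
  - cen (fun i j => dot (fun k => u i k - u j k) (fun k => u i k - u j k)) i j / 2.
Proof.
pose G i j := dot (cent i) (cent j).
have Dform a b : dot (fun k => u a k - u b k) (fun k => u a k - u b k) = G a a + G b b - 2 * G a b.
  rewrite (_ : (fun k => u a k - u b k) = (fun k => cent a k - cent b k)); last first.
    by apply: boolp.funext => k; rewrite /cent; ring.
  exact: dot_sqB.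
have G0 a : \sum_k G a k = 0.
  rewrite /G -dot_sumr (_ : (fun m => \sum_k cent k m) = (fun _ => 0)).
    by rewrite /dot big1 // => k _; rewrite mulr0.
  by apply: boolp.funext => m; rewrite cent_sum.
have G0' a : \sum_k G k a = 0.
  by rewrite -[RHS](G0 a); apply: eq_bigr => k _; rewrite /G dotC.
set tau := \sum_k G k k.
have DE : (fun i j => dot (fun k => u i k - u j k) (fun k => u i k - u j k))
    = (fun a b => G a a + G b b - 2 * G a b).
  by apply: boolp.funext => a; apply: boolp.funext => b; rewrite Dform.
rewrite DE /cen /=.
have c1 : \sum_k (G k k + G j j - 2 * G k j) = tau + n%:R * G j j.
  rewrite sumrB big_split /= sumr_const card_ord -mulr_sumr G0' mulr_natl /tau; ring.
have c2 : \sum_k (G i i + G k k - 2 * G i k) = n%:R * G i i + tau.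
  rewrite sumrB big_split /= sumr_const card_ord -mulr_sumr G0 mulr_natl /tau; ring.
have c3 : \sum_k \sum_l (G k k + G l l - 2 * G k l) = 2 * n%:R * tau.
  rewrite (eq_bigr (fun k => n%:R * G k k + tau)); last first.
    move=> k _; rewrite sumrB big_split /= sumr_const card_ord -mulr_sumr G0 mulr_natl /tau; ring.
  rewrite big_split /= sumr_const card_ord -mulr_sumr mulr_natl /tau; ring.
rewrite c1 c2 c3 /G.
by field.
Qed.

End Cent.

Section Refl.
Variable R : realType.
Variable d : nat.
Implicit Types (A B H Q : 'M[R]_d) (p q w x y : 'I_d -> R).

Lemma app_mul A B y : app (A *m B) y = app A (app B y).
Proof.
apply: boolp.funext => i; rewrite /app.
under eq_bigr do rewrite mxE big_distrl /=.
rewrite exchange_big /=; apply: eq_bigr => l _; rewrite mulr_sumr.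
by apply: eq_bigr => k _; ring.
Qed.

Lemma orth_mul A B : Defs.is_orthogonal A -> Defs.is_orthogonal B ->
  Defs.is_orthogonal (A *m B).
Proof.
rewrite /Defs.is_orthogonal => hA hB.
by rewrite trmx_mul mulmxA -(mulmxA _ _ A) hA mulmx1 hB.
Qed.

Definition delta (k : 'I_d) : 'I_d -> R := fun i => (i == k)%:R.

Lemma dot_delta x k : dot x (delta k) = x k.
Proof.
rewrite /dot /delta (eq_bigr (fun l => x l * (k == l)%:R)) ?sum_delta //.
by move=> l _; rewrite eq_sym.
Qed.

Lemma app_delta H k : app H (delta k) = fun i => H i k.
Proof. by apply: boolp.funext => i; rewrite /app -/(dot (H i) (delta k)) dot_delta. Qed.

Lemma orth_of_dot H : (forall p q, dot (app H p) (app H q) = dot p q) ->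
  Defs.is_orthogonal H.
Proof.
move=> E; apply/matrixP => k l; rewrite !mxE.
have := E (delta k) (delta l); rewrite !app_delta dot_delta /delta eq_sym => <-.
by apply: eq_bigr => i _; rewrite !mxE.
Qed.

Definition refl w : 'M[R]_d :=
  \matrix_(i, j) ((i == j)%:R - 2 / dot w w * (w i * w j)).

Lemma app_refl w y :
  app (refl w) y = fun i => y i - 2 / dot w w * dot w y * w i.
Proof.
apply: boolp.funext => i; rewrite /app.
rewrite (eq_bigr (fun k => y k * (i == k)%:R - (2 / dot w w * w i) * (w k * y k))); last first.
  by move=> k _; rewrite mxE; ring.
rewrite sumrB sum_delta -mulr_sumr -/(dot w y); ring.
Qed.

Lemma dot_refl w x y :
  dot x (app (refl w) y) = dot x y - 2 / dot w w * dot w y * dot x w.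
Proof. by rewrite app_refl dotBr dotZr. Qed.

Lemma refl_orth w : dot w w != 0 -> Defs.is_orthogonal (refl w).
Proof.
move=> hw; apply: orth_of_dot => p q.
rewrite dot_refl !(dotC (app (refl w) p)) !dot_refl (dotC q w).
by rewrite (dotC q p); field.
Qed.

End Refl.

Section Opt.
Variable R : realType.
Variables n d : nat.
Variables u y : 'I_n -> 'I_d -> R.

Definition Fm (M : 'M[R]_d) := \sum_j \sum_i (u j i - \sum_k M i k * y j k)^+2.

Lemma Fm_dot M : Fm M = \sum_j dot (fun i => u j i - app M (y j) i) (fun i => u j i - app M (y j) i).
Proof. by apply: eq_bigr => j _; apply: eq_bigr => i _; rewrite expr2. Qed.

Variable Q : 'M[R]_d.
Hypothesis hQ : Defs.is_orthogonal Q.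
Hypothesis Qmin : forall Q', Defs.is_orthogonal Q' -> Fm Q <= Fm Q'.

Definition vv j := app Q (y j).

Lemma opt H : Defs.is_orthogonal H ->
  \sum_j dot (u j) (app H (vv j)) <= \sum_j dot (u j) (vv j).
Proof.
move=> hH; have h0 := Qmin (orth_mul hH hQ).
have E1 : Fm Q = \sum_j (dot (u j) (u j) + dot (vv j) (vv j) - 2 * dot (u j) (vv j)).
  by rewrite Fm_dot; apply: eq_bigr => j _; rewrite dot_sqB.
have E2 : Fm (H *m Q) = \sum_j (dot (u j) (u j) + dot (vv j) (vv j) - 2 * dot (u j) (app H (vv j))).
  by rewrite Fm_dot; apply: eq_bigr => j _; rewrite app_mul dot_sqB orth_dot.
have h : 0 <= Fm (H *m Q) - Fm Q by rewrite subr_ge0.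
rewrite E1 E2 -sumrB in h.
have : 0 <= 2 * (\sum_j dot (u j) (vv j) - \sum_j dot (u j) (app H (vv j))).
  apply: le_trans h _; rewrite le_eqVlt; apply/orP; left; apply/eqP.
  rewrite -sumrB mulr_sumr; apply: eq_bigr => j _; ring.
by rewrite pmulr_rge0 // subr_ge0.
Qed.

Lemma H1 w : 0 <= \sum_j dot w (u j) * dot w (vv j).
Proof.
have [w0|wn0] := eqVneq (dot w w) 0.
  have wk k : w k = 0.
    have hge : forall i, true -> 0 <= w i * w i by move=> i _; rewrite -expr2 sqr_ge0.
    have := psumr_eq0P hge w0.
    by move=> /(_ k isT) /eqP; rewrite mulf_eq0 orbb => /eqP.
  apply: sumr_ge0 => j _.
  by rewrite /dot big1 ?mul0r // => k _; rewrite wk mul0r.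
have wpos : 0 < dot w w by rewrite lt_def wn0 dot_ge0.
have := opt (refl_orth wn0).
under eq_bigr do rewrite dot_refl.
have E : \sum_i 2 / dot w w * dot w (vv i) * dot (u i) w = 2 / dot w w * \sum_i dot w (vv i) * dot (u i) w.
  by rewrite mulr_sumr; apply: eq_bigr => i _; rewrite mulrA.
rewrite sumrB E.
move=> h.
have : 0 <= 2 / dot w w * \sum_i dot w (vv i) * dot (u i) w.
  by move: h; set a := \sum_j _; set b := \sum_i _; lra.
rewrite pmulr_rge0 ?divr_gt0 //.
by under eq_bigr do rewrite (dotC (u _) w) mulrC.
Qed.

Lemma quad0 (del bet : R) : (forall t, t * del <= t ^+ 2 * bet) -> del = 0.
Proof.
move=> H.
set k := `|bet| + 1.
have k0 : 0 < k by rewrite /k ltr_pwDr // normr_ge0.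
set t := del / (2 * k).
have ht : del = 2 * k * t by rewrite /t; field; rewrite gt_eqF.
have hb : bet <= `|bet| := ler_norm bet.
have := H t; rewrite ht => h.
have t2 : t ^+ 2 <= 0.
  have h3 : t ^+ 2 * bet <= t ^+ 2 * (k - 1).
    by rewrite ler_wpM2l ?sqr_ge0 // /k; lra.
  have := sqr_ge0 t.
  nra.
have : t = 0.
  by apply/eqP; rewrite -sqrf_eq0 eq_le t2 sqr_ge0.
by move=> ->; rewrite mulr0.
Qed.

Lemma H2 a b : \sum_j u j a * vv j b = \sum_j u j b * vv j a.
Proof.
have [->|ab] := eqVneq a b; first by [].
pose S x z := \sum_j u j x * vv j z.
suff key : forall t : R, t * (S a b - S b a) <= t ^+ 2 * (S a a + S b b).
  by apply/eqP; rewrite -subr_eq0; apply/eqP; exact: quad0 key.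
move=> t.
pose ea := @delta R d a.
pose w := fun i => @delta R d a i + t * @delta R d b i.
have eax x : dot ea x = x a by rewrite dotC dot_delta.
have wx x : dot w x = x a + t * x b.
  by rewrite /w dotDl dotZl !(dotC (@delta R d _)) !dot_delta.
have eaea : dot ea ea = 1 by rewrite eax /ea /delta eqxx.
have eaw : dot ea w = 1 by rewrite eax /w /delta eqxx (negbTE ab) mulr0 addr0.
have tt : 0 < 1 + t ^+ 2 by rewrite ltr_pwDl // sqr_ge0.
have ww : dot w w = 1 + t ^+ 2.
  rewrite wx /w /delta !eqxx (negbTE ab) eq_sym (negbTE ab) /=; ring.
have ea0 : dot ea ea != 0 by rewrite eaea oner_neq0.
have w0 : dot w w != 0 by rewrite ww gt_eqF.
have hG := opt (orth_mul (refl_orth ea0) (refl_orth w0)).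
set c2 := 2 / (1 + t ^+ 2).
have pj j : dot (u j) (app (refl ea *m refl w) (vv j)) = dot (u j) (vv j) +
   c2 * (- (t ^+ 2) * (u j a * vv j a) + t * (u j a * vv j b) - t * (u j b * vv j a)
         - t ^+ 2 * (u j b * vv j b)).
  rewrite app_mul dot_refl !dot_refl eaea ww eaw !wx !eax (dotC (u j) ea) eax.
  rewrite (dotC (u j) w) wx /c2; field; rewrite gt_eqF //.
have sumE : \sum_j c2 * (- (t ^+ 2) * (u j a * vv j a) + t * (u j a * vv j b)
      - t * (u j b * vv j a) - t ^+ 2 * (u j b * vv j b))
    = c2 * (- (t ^+ 2) * S a a + t * S a b - t * S b a - t ^+ 2 * S b b).
  rewrite -mulr_sumr; congr (_ * _).
  by rewrite /S !mulr_sumr -!sumrN -!big_split.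
rewrite (eq_bigr _ (fun j _ => pj j)) big_split /= sumE in hG.
have c20 : 0 < c2 by rewrite /c2 divr_gt0.
have : c2 * (- (t ^+ 2) * S a a + t * S a b - t * S b a - t ^+ 2 * S b b) <= 0.
  by move: hG; set A := \sum_j _; lra.
rewrite pmulr_rle0 //; lra.
Qed.

End Opt.

Section P1b.
Local Open Scope classical_set_scope.
Variable R : realType.
Variables d n : nat.
Implicit Types X Y : 'M[R]_(d, n).

Definition SG X Y := [set c | exists (p : 'S_n) (Q : 'M[R]_d) (t : 'cV[R]_d),
                         Defs.is_orthogonal Q /\ c = procrustes_cost X Y p Q t].

Lemma orth1 : Defs.is_orthogonal (1%:M : 'M[R]_d).
Proof. by rewrite /Defs.is_orthogonal trmx1 mul1mx. Qed.

Lemma SG_n0 X Y : (SG X Y !=set0)%classic.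
Proof. by exists (procrustes_cost X Y 1%g 1%:M 0); exists 1%g, 1%:M, 0; split => //; exact: orth1. Qed.

Lemma SG_lb X Y : has_lbound (SG X Y).
Proof. by exists 0 => c [p [Q [t [_ ->]]]]; exact: cost_ge0. Qed.

Lemma dG_sq X Y : dG X Y ^+ 2 = inf (SG X Y).
Proof.
rewrite sqr_sqrtr //; apply: lb_le_inf; first exact: SG_n0.
by move=> c [p [Q [t [_ ->]]]]; exact: cost_ge0.
Qed.

Lemma infSG_ge0 X Y : 0 <= inf (SG X Y).
Proof. by rewrite -dG_sq sqr_ge0. Qed.

Lemma infSG_le X Y p Q t : Defs.is_orthogonal Q -> inf (SG X Y) <= procrustes_cost X Y p Q t.
Proof. move=> hQ; apply: (ge_inf (SG_lb X Y)); by exists p, Q, t. Qed.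

Lemma dD_le X Y p : dD X Y <= hgw_cost X Y p.
Proof.
apply: ge_inf; last by exists p.
by exists 0 => c [q ->]; exact: hgw_ge0.
Qed.

Lemma dD_ge X Y L : (forall p, L <= hgw_cost X Y p) -> L <= dD X Y.
Proof.
move=> H; apply: lb_le_inf; first by exists (hgw_cost X Y 1%g); exists 1%g.
by move=> c [p ->].
Qed.

Lemma part1 (hn : (0 < n)%N) X Y :
  dD X Y <= 2 * (n%:R * Num.sqrt n%:R) * dG X Y.
Proof.
set K := 2 * (n%:R * Num.sqrt n%:R).
have Kpos : 0 < K.
  by rewrite /K !mulr_gt0 // ?ltr0n // sqrtr_gt0 ltr0n.
rewrite leNgt; apply/negP => H.
set s := dG X Y in H.
have s0 : 0 <= s by exact: sqrtr_ge0.
have q0 : 0 < dD X Y / K.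
  by rewrite divr_gt0 //; apply: le_lt_trans H; rewrite mulr_ge0 // ltW.
have sq : s < dD X Y / K by rewrite ltr_pdivlMr // mulrC.
have ms : inf (SG X Y) < (dD X Y / K) ^+ 2.
  rewrite -dG_sq -/s; move: sq s0; nra.
have [c [p [Q [t [hQ ->]]]] cl] := inf_lt (SG_n0 X Y) ms.
have sc : Num.sqrt (procrustes_cost X Y p Q t) < dD X Y / K.
  rewrite -(ger0_norm (ltW q0)) -sqrtr_sqr ltr_sqrt //.
  by rewrite exprn_gt0.
have := le_trans (dD_le X Y p) (@hgw_le_cost R d n X Y p Q t hQ).
have : K * Num.sqrt (procrustes_cost X Y p Q t) < dD X Y.
  by rewrite mulrC -ltr_pdivlMr.
rewrite -/K; lra.
Qed.

End P1b.

Section Topo.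
Local Open Scope classical_set_scope.
Variable R : realType.

Lemma cont_sum (T : topologicalType) (I : Type) (r : seq I) (P : pred I)
    (F : I -> T -> R) :
  (forall i, continuous (F i)) -> continuous (fun x => \sum_(i <- r | P i) F i x).
Proof.
move=> hF; elim: r => [|a r IH].
  have -> : (fun x => \sum_(i <- [::] | P i) F i x) = (fun _ => 0).
    by apply: boolp.funext => x; rewrite big_nil.
  exact: cst_continuous.
case Pa: (P a).
  have -> : (fun x => \sum_(i <- a :: r | P i) F i x) =
            (fun x => F a x + \sum_(i <- r | P i) F i x).
    by apply: boolp.funext => x; rewrite big_cons Pa.
  by move=> x; apply: (cvgD (hF a x) (IH x)).
have -> : (fun x => \sum_(i <- a :: r | P i) F i x) =
          (fun x => \sum_(i <- r | P i) F i x).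
  by apply: boolp.funext => x; rewrite big_cons Pa.
exact: IH.
Qed.

Lemma cont_mul (T : topologicalType) (f g : T -> R) :
  continuous f -> continuous g -> continuous (fun x => f x * g x).
Proof. by move=> hf hg x; apply: (cvgM (hf x) (hg x)). Qed.

Variable d : nat.

Lemma cont_entry (i j : 'I_d) :
  continuous (fun v : 'rV[R]_(d * d) => vec_mx v i j).
Proof.
have -> : (fun v : 'rV[R]_(d * d) => vec_mx v i j) = (fun v => v 0 (mxvec_index i j)).
  by apply: boolp.funext => v; rewrite -[in RHS](vec_mxK v) mxvecE.
exact: coord_continuous.
Qed.

Lemma cont_sub (T : topologicalType) (f g : T -> R) :
  continuous f -> continuous g -> continuous (fun x => f x - g x).
Proof. by move=> hf hg x; apply: (cvgB (hf x) (hg x)). Qed.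

Lemma orth_entry (Q : 'M[R]_d) i k : Defs.is_orthogonal Q -> `|Q i k| <= 1.
Proof.
move=> hQ; have E : \sum_i0 Q i0 k * Q i0 k = 1 by rewrite (orthP hQ k k) eqxx.
have : Q i k ^+ 2 <= 1.
  rewrite -E (bigD1 i) //= -expr2 lerDl.
  by apply: sumr_ge0 => j _; rewrite -expr2 sqr_ge0.
rewrite ler_norml => h; apply/andP; split; nra.
Qed.

Lemma exists_min n (u y : 'I_n -> 'I_d -> R) : exists Q, Defs.is_orthogonal Q /\
  forall Q', Defs.is_orthogonal Q' -> Fm u y Q <= Fm u y Q'.
Proof.
pose A := [set v : 'rV[R]_(d * d) | Defs.is_orthogonal (vec_mx v)].
have A0 : A !=set0.
  by exists (mxvec 1%:M); rewrite /A /= mxvecK /Defs.is_orthogonal trmx1 mul1mx.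
have Aeq : A = \bigcap_(kl in [set: 'I_d * 'I_d])
    [set v | \sum_i vec_mx v i kl.1 * vec_mx v i kl.2 = (kl.1 == kl.2)%:R].
  apply/seteqP; split => v /=.
    by move=> hv [k l] _ /=; exact: orthP hv k l.
  move=> h; apply/matrixP => k l; rewrite !mxE -(h (k, l)) //=.
  by apply: eq_bigr => i _; rewrite !mxE.
have Acl : closed A.
  rewrite Aeq; apply: closed_bigI => -[k l] _.
  have gc : continuous (fun v : 'rV[R]_(d * d) => \sum_i vec_mx v i k * vec_mx v i l).
    by apply: cont_sum => i; apply: cont_mul; exact: cont_entry.
  have := preimage_closed (fun x _ => gc x) (closed_eq (y := ((k == l)%:R : R))).
  by [].
have Abd : bounded_set A.
  exists 1; split; first by rewrite num_real.
  move=> M M1 v Av /=.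
  rewrite [leLHS]/Num.norm /= mx_normrE.
  apply: bigmax_le => [|[i k] _ /=]; first by rewrite (le_trans _ (ltW M1)).
  rewrite ord1; apply: le_trans (ltW M1).
  case: (mxvec_indexP k) => a b.
  by rewrite -[v]vec_mxK mxvecE; exact: orth_entry.
have Acp : compact A := bounded_closed_compact Abd Acl.
pose f v := Fm u y (vec_mx v).
have fc : continuous f.
  apply: cont_sum => j; apply: cont_sum => i.
  have -> : (fun v : 'rV[R]_(d * d) => (u j i - \sum_k vec_mx v i k * y j k) ^+ 2) =
     (fun v => (u j i - \sum_k vec_mx v i k * y j k) * (u j i - \sum_k vec_mx v i k * y j k)).
    by apply: boolp.funext => v; rewrite expr2.
  apply: cont_mul; apply: cont_sub; try exact: cst_continuous;
    by apply: cont_sum => k; apply: cont_mul; [exact: cont_entry | exact: cst_continuous].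
have [c cA cmin] := compact_EVT_min A0 Acp (continuous_subspaceT fc).
exists (vec_mx c); split; first by move: cA; rewrite inE.
move=> Q' hQ'; have := cmin (mxvec Q'); rewrite /f mxvecK; apply.
by rewrite inE /A /= mxvecK.
Qed.

End Topo.

Section Main2.
Variable R : realType.
Variables d n : nat.
Hypothesis hn : (0 < n)%N.

Lemma sq_le_sqsum (I : finType) (e : I -> I -> R) :
  \sum_i \sum_j e i j ^+ 2 <= (\sum_i \sum_j `|e i j|) ^+ 2.
Proof.
set S := \sum_i \sum_j `|e i j|.
have S0 : 0 <= S by apply: sumr_ge0 => i _; apply: sumr_ge0.
have le1 i j : `|e i j| <= S.
  rewrite /S (bigD1 i) //= (bigD1 j) //= -addrA lerDl.
  apply: addr_ge0; first by apply: sumr_ge0.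
  by apply: sumr_ge0 => k _; apply: sumr_ge0.
rewrite expr2 {2}/S mulr_sumr; apply: ler_sum => i _.
rewrite mulr_sumr; apply: ler_sum => j _.
rewrite -real_normK ?num_real // expr2 ler_wpM2r //.
Qed.

Lemma coldist_le2 (X : 'M[R]_(d, n)) i j : norm12 X <= 1 -> coldist X i j <= 2.
Proof.
move=> hX.
have e : coldist X i j = enorm (fun k => colv X i k - colv X j k) by rewrite coldistE.
rewrite e; apply: le_trans (enorm_triangleB (colv X i) (colv X j)) _.
rewrite -!colnormE.
have h k : colnorm X k <= 1 by apply: le_trans hX; exact: le_bigmax.
by have := h i; have := h j; lra.
Qed.

Lemma main2 (X Y : 'M[R]_(d, n)) (p : 'S_n) :
  norm12 X <= 1 -> norm12 Y <= 1 ->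
  exists Q t, Defs.is_orthogonal Q /\
    procrustes_cost X Y p Q t <= (4 * n%:R + 2) * hgw_cost X Y p.
Proof.
move=> hX hY.
pose xs j := fun k => X k j.
pose ys j := fun k => Y k (p j).
pose u := cent xs.
pose yb := cent ys.
have [Q [hQ Qmin]] := exists_min u yb.
pose v := vv yb Q.
pose t : 'cV[R]_d := \col_i (app Q (mean ys) i - mean xs i).
exists Q, t; split => //.
set h := hgw_cost X Y p.
have h0 : 0 <= h by exact: hgw_ge0.
have costE : procrustes_cost X Y p Q t = \sum_j dot (fun k => u j k - v j k) (fun k => u j k - v j k).
  apply: eq_bigr => j _; apply: eq_bigr => i _.
  suff -> : X i j - (Q *m Y) i (p j) + t i ord0 = u j i - v j i by rewrite expr2.
  have ee : \sum_k Q i k * (ys j k - mean ys k) = \sum_k Q i k * Y k (p j) - \sum_k Q i k * mean ys k.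
    by rewrite -sumrB; apply: eq_bigr => k _; rewrite /ys; ring.
  rewrite /u /v /vv /yb /cent !mxE /= /app ee /xs /ys; ring.
have c0 : 0 <= procrustes_cost X Y p Q t by exact: cost_ge0.
have K := key (H1 hQ Qmin) (H2 hQ Qmin).
rewrite card_ord -costE in K.
pose DX i j := coldist X i j ^+ 2.
pose DY i j := coldist Y (p i) (p j) ^+ 2.
have gX i j : dot (u i) (u j) = - cen DX i j / 2.
  rewrite /u gram_cen //; congr (- cen _ _ _ / 2).
  apply: boolp.funext => a; apply: boolp.funext => b.
  by rewrite /DX coldistE enorm_sq.
have gY i j : dot (v i) (v j) = - cen DY i j / 2.
  rewrite /v /vv orth_dot // /yb gram_cen //; congr (- cen _ _ _ / 2).
  apply: boolp.funext => a; apply: boolp.funext => b.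
  by rewrite /DY coldistE enorm_sq.
have MS : \sum_i \sum_j (dot (u i) (u j) - dot (v i) (v j)) ^+ 2 <= 4 * h ^+ 2.
  have E : \sum_i \sum_j (dot (u i) (u j) - dot (v i) (v j)) ^+ 2 =
      (\sum_i \sum_j cen (fun i j => DX i j - DY i j) i j ^+ 2) / 4.
    rewrite mulr_suml; apply: eq_bigr => i _; rewrite mulr_suml; apply: eq_bigr => j _.
    by rewrite gX gY -cenB; field.
  rewrite E.
  have := cen_sq hn (fun i j => DX i j - DY i j).
  have : \sum_i \sum_j (DX i j - DY i j) ^+ 2 <= 16 * h ^+ 2.
    have hs : \sum_i \sum_j (coldist X i j - coldist Y (p i) (p j)) ^+ 2 <= h ^+ 2.
      exact: (sq_le_sqsum (fun i j => coldist X i j - coldist Y (p i) (p j))).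
    have : \sum_i \sum_j (DX i j - DY i j) ^+ 2 <=
        16 * \sum_i \sum_j (coldist X i j - coldist Y (p i) (p j)) ^+ 2.
      rewrite mulr_sumr; apply: ler_sum => i _; rewrite mulr_sumr; apply: ler_sum => j _.
      have a2 := coldist_le2 i j hX; have b2 := coldist_le2 (p i) (p j) hY.
      have a0 := coldist_ge0 X i j; have b0 := coldist_ge0 Y (p i) (p j).
      rewrite /DX /DY.
      move: a2 b2 a0 b0.
      set a := coldist X i j; set b := coldist Y (p i) (p j) => a2 b2 a0 b0.
      have -> : (a ^+ 2 - b ^+ 2) ^+ 2 = (a - b) ^+ 2 * (a + b) ^+ 2 by ring.
      rewrite mulrC ler_wpM2r ?sqr_ge0 //; nra.
    move=> h16; apply: le_trans h16 _; by rewrite ler_wpM2l.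
  set s1 := \sum_i \sum_j cen _ _ _ ^+ 2; set s2 := \sum_i _; lra.
set c := procrustes_cost X Y p Q t.
have n0 : 0 <= (n%:R : R) by rewrite ler0n.
have K2 : c ^+ 2 <= 8 * n%:R * h ^+ 2.
  apply: le_trans K _.
  have hh : 2 * n%:R * \sum_i \sum_j (dot (u i) (u j) - dot (v i) (v j)) ^+ 2 <= 2 * n%:R * (4 * h ^+ 2).
    by rewrite ler_wpM2l // mulr_ge0.
  apply: le_trans hh _; rewrite le_eqVlt; apply/orP; left; apply/eqP; ring.
have : 8 * n%:R * h ^+ 2 <= ((4 * n%:R + 2) * h) ^+ 2.
  have : 0 <= h ^+ 2 by rewrite sqr_ge0.
  nra.
move=> hb; have := le_trans K2 hb.
have : 0 <= (4 * n%:R + 2) * h by rewrite mulr_ge0 //; lra.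
nra.
Qed.

End Main2.

Theorem theorem1 (R : realType) (n d : nat) (hn : (0 < n)%N) (hd : (0 < d)%N) :
  (forall X Y : 'M[R]_(d, n),
     dD X Y <= 2 * (n%:R * Num.sqrt n%:R) * dG X Y) /\
  (forall X Y : 'M[R]_(d, n),
     norm12 X <= 1 -> norm12 Y <= 1 ->
     (4 * n%:R + 2)^-1 * dG X Y ^+ 2 <= dD X Y).
Proof.
split.
  by move=> X Y; exact: part1.
move=> X Y hX hY; apply: dD_ge => p.
have [Q [t [hQ hc]]] := main2 hn p hX hY.
have K0 : 0 < 4 * n%:R + 2 :> R by rewrite ltr_wpDl // mulr_ge0 // ler0n.
have h := le_trans (infSG_le X Y p t hQ) hc.
rewrite -dG_sq in h.
by rewrite ler_pdivrMl.
Qed.
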